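(* Let $L=L_2(q)=\mathrm{PSL}_2(q)$ be simple and let $r$ be an odd prime dividing $|L|$ but not dividing $q$. Then for every involution $x\in\mathrm{PGL}_2(q)$ (viewed as an automorphism of $L$) one has $\beta_r(x,L)=2$.
   Context: $\mathrm{PGL}_2(q)$ is identified with the group of inner-diagonal automorphisms of $L=\mathrm{PSL}_2(q)$. For a nonabelian finite simple group $L$ (identified with $\mathrm{Inn}(L)$), a nontrivial $x\in\mathrm{Aut}(L)$ and a prime $r$ dividing $|L|$, $\beta_r(x,L)$ is the smallest $k$ such that some $g_1,\dots,g_k\in L$ give a subgroup $\langle x^{g_1},\dots,x^{g_k}\rangle$ of $\langle L,x\rangle$ of order divisible by $r$. *)

(* Defs.v *)
From mathcomp Require Import all_boot all_algebra all_fingroup all_solvable all_field.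
Set Implicit Arguments. Unset Strict Implicit. Unset Printing Implicit Defensive.
Import GRing.Theory.
Local Open Scope group_scope.

Section PSL2.
Variable F : finFieldType.

Definition GL2 := {'GL_2[F]}.

Definition SL2set : {set GL2} := [set g : GL2 | (\det (GLval g) == 1)%R].

Lemma SL2_group_set : group_set SL2set.
Proof.
apply/group_setP; split; first by rewrite inE GL_1E det1.
move=> x y; rewrite !inE GL_ME /= det_mulmx => /eqP-> /eqP->.
by rewrite mulr1.
Qed.
Canonical SL2_group := group SL2_group_set.

Definition ZGL2 : {set GL2} := 'Z([set: GL2]).

Definition PGL2 := coset_of ZGL2.
Definition PGL2set : {set PGL2} := ([set: GL2] / ZGL2)%g.

(* L = PSL_2(q) = SL_2(q) Z / Z as a subgroup of PGL_2(q) *)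
Definition PSL2 : {group PGL2} := (SL2_group / ZGL2)%G.
End PSL2.

Definition beta_holds (gT : finGroupType) (r : nat) (x : gT) (L : {set gT})
  (k : nat) : Prop :=
  exists g : 'I_k -> gT,
    (forall i, g i \in L) /\ (r %| #|<< [set (x ^ g i)%g | i : 'I_k] >>|)%N.

Definition beta_eq (gT : finGroupType) (r : nat) (x : gT) (L : {set gT})
  (k : nat) : Prop :=
  beta_holds r x L k /\ (forall j, (j < k)%N -> ~ beta_holds r x L j).

(* Main.v *)
Require Import Defs.
From mathcomp Require Import all_boot all_algebra all_fingroup all_solvable all_field.
From mathcomp Require Import ring.

Module Helpers.
Set Implicit Arguments. Unset Strict Implicit. Unset Printing Implicit Defensive.
Import GRing.Theory.
Local Open Scope ring_scope.

Section M22.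
Variable F : fieldType.
Definition i0 : 'I_2 := @Ordinal 2 0 isT.
Definition i1 : 'I_2 := @Ordinal 2 1 isT.
Definition mx22 (a b c d : F) : 'M[F]_2 :=
  \matrix_(i < 2, j < 2) if val i == 0%N then (if val j == 0%N then a else b)
                          else (if val j == 0%N then c else d).

Lemma ord2P (i : 'I_2) : i = i0 \/ i = i1.
Proof. case: i => [[|[|k]] Hk] //; [left|right]; exact: val_inj. Qed.

Lemma mx22E (A : 'M[F]_2) : A = mx22 (A i0 i0) (A i0 i1) (A i1 i0) (A i1 i1).
Proof.
by apply/matrixP => i j; rewrite mxE; case: (ord2P i) => ->; case: (ord2P j) => ->.
Qed.

Lemma mx22_eq a b c d a' b' c' d' :
  mx22 a b c d = mx22 a' b' c' d' -> [/\ a = a', b = b', c = c' & d = d'].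
Proof.
move=> H; have E i j := congr1 (fun M : 'M[F]_2 => M i j) H.
by move: (E i0 i0) (E i0 i1) (E i1 i0) (E i1 i1); rewrite !mxE /=.
Qed.

Lemma mx22_congr a b c d a' b' c' d' :
  a = a' -> b = b' -> c = c' -> d = d' -> mx22 a b c d = mx22 a' b' c' d'.
Proof. by move=> -> -> -> ->. Qed.

Lemma mul22 a b c d a' b' c' d' :
  mx22 a b c d *m mx22 a' b' c' d' =
  mx22 (a*a'+b*c') (a*b'+b*d') (c*a'+d*c') (c*b'+d*d').
Proof.
apply/matrixP => i j; rewrite !mxE big_ord_recl big_ord1 !mxE /=.
by case: (ord2P i) => ->; case: (ord2P j) => ->.
Qed.

Lemma det22 a b c d : \det (mx22 a b c d) = a * d - b * c.
Proof.
rewrite (expand_det_row _ i0) big_ord_recl big_ord1 /cofactor !det_mx11 !mxE /=.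
rewrite /=.
by rewrite /bump /= expr0 expr1 mul1r mulN1r mulrN. Qed.

Lemma scalar22 (c : F) : c%:M = mx22 c 0 0 c.
Proof.
by apply/matrixP => i j; rewrite !mxE; case: (ord2P i) => ->; case: (ord2P j) => ->.
Qed.
Lemma scale22 s a b c d : s *: mx22 a b c d = mx22 (s*a) (s*b) (s*c) (s*d).
Proof.
by apply/matrixP => i j; rewrite !mxE; case: (ord2P i) => ->; case: (ord2P j) => ->.
Qed.
Lemma add22 a b c d a' b' c' d' :
  mx22 a b c d + mx22 a' b' c' d' = mx22 (a+a') (b+b') (c+c') (d+d').
Proof.
by apply/matrixP => i j; rewrite !mxE; case: (ord2P i) => ->; case: (ord2P j) => ->.
Qed.

Lemma companion (B : 'M[F]_2) (s d : F) : ~ (exists c, B = c%:M) ->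
  B *m B = s *: B + d%:M -> exists P, \det P != 0 /\ B *m P = P *m mx22 0 d 1 s.
Proof.
rewrite [B]mx22E; set a := B i0 i0; set b := B i0 i1; set c := B i1 i0; set e := B i1 i1.
move=> nsc; rewrite mul22 scale22 scalar22 add22 => /mx22_eq[h1 h2 h3 h4].
pose P x1 x2 := mx22 x1 (a*x1 + b*x2) x2 (c*x1 + e*x2).
have key x1 x2 : mx22 a b c e *m P x1 x2 = P x1 x2 *m mx22 0 d 1 s.
  rewrite !mul22; congr mx22; [ring | | ring | ].
    transitivity ((a*a+b*c)*x1 + (a*b+b*e)*x2); first ring.
    by rewrite h1 h2; ring.
  transitivity ((c*a+e*c)*x1 + (c*b+e*e)*x2); first ring.
  by rewrite h3 h4; ring.
have detP x1 x2 : \det (P x1 x2) = c*x1^+2 + (e - a)*x1*x2 - b*x2^+2.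
  by rewrite det22; ring.
have [c0|cn0] := eqVneq c 0; last first.
  exists (P 1 0); split; last exact: key.
  have -> : \det (P 1 0) = c by rewrite detP; ring.
  done.
have [b0|bn0] := eqVneq b 0; last first.
  exists (P 0 1); split; last exact: key.
  have -> : \det (P 0 1) = - b by rewrite detP; ring.
  by rewrite oppr_eq0.
have [ae|ane] := eqVneq a e.
  by case: nsc; exists a; rewrite scalar22 c0 b0 ae.
exists (P 1 1); split; last exact: key.
have -> : \det (P 1 1) = e - a by rewrite detP c0 b0; ring.
by rewrite subr_eq0 eq_sym.
Qed.
End M22.

Require Import Defs.
Section GLs.
Variable F : finFieldType.
Local Notation GL := (GL2 F).
Local Notation Z := (ZGL2 F).

Definition mkGL (A : 'M[F]_2) : GL := insubd (1%g : GL) A.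
Lemma mkGLK A : \det A != 0 -> GLval (mkGL A) = A.
Proof. by move=> H; rewrite /mkGL insubdK // unfold_in unitmxE unitfE. Qed.

Lemma Zscalar (g : GL) : g \in Z -> exists c, GLval g = c%:M.
Proof.
case/centerP=> _ Hc.
have e1d : \det (mx22 1 1 0 1 : 'M[F]_2) != 0 by rewrite det22 mulr1 mulr0 subr0 oner_eq0.
have e2d : \det (mx22 1 0 1 1 : 'M[F]_2) != 0 by rewrite det22 mulr1 mul0r subr0 oner_eq0.
have C1 := congr1 GLval (Hc _ (in_setT (mkGL (mx22 1 1 0 1)))).
have C2 := congr1 GLval (Hc _ (in_setT (mkGL (mx22 1 0 1 1)))).
rewrite !GL_ME -!mulmxE !mkGLK // in C1 C2.
move: C1 C2; rewrite [GLval g]mx22E.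
set a := GLval g i0 i0; set b := GLval g i0 i1; set c := GLval g i1 i0; set d := GLval g i1 i1.
rewrite !mul22 => /mx22_eq[h1 h2 h3 h4] /mx22_eq[k1 k2 k3 k4].
exists a; rewrite scalar22.
rewrite !(mulr1, mulr0, mul1r, mul0r, addr0, add0r) in h1 h2 h3 h4 k1 k2 k3 k4.
have c0 : c = 0 by apply: (addIr d); rewrite add0r.
have b0 : b = 0 by apply: (addIr d); rewrite add0r.
have ad : a = d by apply: (addIr b); rewrite [d + b]addrC.
by rewrite c0 b0 ad.
Qed.

Lemma scalarZ (g : GL) c : GLval g = c%:M -> g \in Z.
Proof.
move=> Hg; apply/centerP; split; first exact: in_setT.
move=> h _; apply: val_inj; change (GLval (g * h)%g = GLval (h * g)%g).
rewrite !GL_MxE Hg mul_mx_scalar mul_scalar_mx; done.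
Qed.
End GLs.
Lemma sum_sq (F : finFieldType) (c l : F) : c != 0 -> (2%:R : F) != 0 ->
  exists a b, a ^+ 2 + c * b ^+ 2 = l.
Proof.
move=> cn0 two0.
pose S1 := [set a ^+ 2 | a : F].
pose S2 := [set l - c * s | s in S1].
have cS2 : #|S2| = #|S1|.
  by apply: card_imset => x y /= /(addrI l) /oppr_inj /(mulfI cn0).
have sq0 (x : F) : x ^+ 2 = 0 -> x = 0 by move/eqP; rewrite expf_eq0 /= => /eqP.
have x2 (x : F) : x = - x -> x = 0.
  move=> H; apply/eqP; move: two0; apply: contraR => xn0.
  have : x *+ 2 = 0 by rewrite mulr2n {1}H addNr.
  by rewrite -(mulr_natr x 2) => /eqP; rewrite mulf_eq0 (negPf xn0) /= => /eqP->.
pose h (x : F) := (x ^+ 2, (enum_rank x < enum_rank (- x))%N).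
have hinj : injective h.
  move=> x y [e1 e2].
  have : (x - y) * (x + y) = 0 by rewrite -[RHS](subrr (x^+2)) {2}e1; ring.
  move/eqP; rewrite mulf_eq0 => /orP[/eqP/subr0_eq //|/eqP xy].
  have yx : y = - x by apply/eqP; rewrite -(subr_eq0) opprK addrC xy.
  rewrite yx opprK in e2.
  have [lt|ge] := ltnP (enum_rank x) (enum_rank (- x)).
    by move: e2; rewrite lt => /esym; rewrite ltnNge ltnW.
  move: e2; rewrite ltnNge ge /= => /esym/negbT; rewrite -leqNgt => le.
  have : enum_rank x = enum_rank (- x) by apply/val_inj/eqP; rewrite eqn_leq le ge.
  by move/enum_rank_inj/x2 => x0; rewrite yx x0 oppr0.
have cS1 : (#|F| < 2 * #|S1|)%N.
  have sub : h @: [set: F] \subset setX S1 [set: bool] :\ (0, true).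
    apply/subsetP => z /imsetP[x _ ->]; rewrite !inE /= eqE /= negb_and.
    have inS1 : x ^+ 2 \in S1 by apply/imsetP; exists x.
    rewrite inS1 andbT.
    have [x0|xn0] := eqVneq x 0; last by rewrite expf_eq0 xn0.
    by rewrite x0 oppr0 ltnn orbT.
  have := subset_leq_card sub.
  have in0 : ((0 : F), true) \in setX S1 [set: bool].
    by rewrite !inE /= andbT; apply/imsetP; exists (0 : F); rewrite // expr0n.
  have cA := cardsD1 ((0 : F), true) (setX S1 [set: bool]).
  rewrite in0 cardsX cardsT card_bool in cA.
  rewrite card_imset // cardsT => le.
  have : (1 + #|F| <= #|S1| * 2)%N by rewrite cA leq_add2l.
  by rewrite add1n mulnC.
have [z] : exists z, z \in S1 :&: S2.
  apply/set0Pn; apply: contraTneq cS1 => I0.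
  rewrite -leqNgt mul2n -addnn -{2}cS2 -cardsUI I0 cards0 addn0.
  exact: max_card.
rewrite inE => /andP[/imsetP[a _ ->] /imsetP[s /imsetP[b _ ->] E]].
by exists a, b; rewrite E; ring.
Qed.

Lemma rep (F : finFieldType) (t l : F) : l != 0 -> ((2%:R : F) != 0 -> t ^+ 2 != 4%:R) ->
  exists u v, u ^+ 2 + t * u * v + v ^+ 2 = l /\ ~ (exists c, mx22 v (u + t * v) u (- v) = c%:M).
Proof.
move=> ln0 ht.
have [two0|two0] := eqVneq (2%:R : F) 0.
  have sqinj : injective (fun x : F => x ^+ 2).
    move=> x y /= e; apply/eqP; rewrite -subr_eq0.
    suff : (x - y) ^+ 2 == 0 by rewrite expf_eq0.
    have -> : (x - y) ^+ 2 = x ^+ 2 - y ^+ 2 + 2%:R * (y ^+ 2 - x * y) by ring.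
    by rewrite e two0 subrr mul0r addr0.
  have [g _ Kg] := injF_bij sqinj.
  exists (g l), 0; split; first by rewrite -[RHS](Kg l); ring.
  case=> k; rewrite scalar22 => /mx22_eq[_ _ e _].
  by move: ln0; rewrite -(Kg l) /= e expr2 mul0r eqxx.
have tn := ht two0.
pose c := 1 - t ^+ 2 / 4%:R.
have four0 : (4%:R : F) != 0.
  by rewrite (_ : (4%:R : F) = 2%:R * 2%:R) ?mulf_neq0 // -natrM.
have cn0 : c != 0.
  apply: contra tn => /eqP c0; apply/eqP.
  have := congr1 (fun z => z * 4%:R) c0; rewrite /c mul0r mulrBl mul1r mulfVK //.
  by move/eqP; rewrite subr_eq0 => /eqP.
have [a [b E]] := sum_sq l cn0 two0.
exists (a - t * b / 2%:R), b; split.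
  by rewrite -E /c; field; rewrite four0 two0.
case=> k; rewrite scalar22 => /mx22_eq[e1 e2 e3 e4].
have b0 : b = 0.
  apply/eqP; move: two0; apply: contraR => bn0.
  have : b *+ 2 = 0 by rewrite mulr2n {2}e1 -e4 subrr.
  by rewrite -(mulr_natr b 2) => /eqP; rewrite mulf_eq0 (negPf bn0) /= => /eqP->.
rewrite b0 !mulr0 mul0r subr0 in e3.
by move: ln0; rewrite -E e3 b0 expr2 !mulr0 addr0 eqxx.
Qed.

Lemma charq (F : finFieldType) : (#|F|%:R : F) = 0.
Proof. by rewrite -(FinRing.zmodXgE (U := F)) -cardsT expg_cardG ?inE. Qed.

Lemma unip_pos (F : fieldType) (k : nat) :
  (mx22 0 (-1) 1 2%:R : 'M[F]_2) ^+ k = mx22 (1 - k%:R) (- k%:R) k%:R (1 + k%:R).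
Proof.
elim: k => [|k IH]; first by rewrite expr0 !(mulr0n, subr0, oppr0, addr0) -scalar22.
rewrite exprSr IH -mulmxE mul22 (mulrSr 1 k); congr mx22; ring.
Qed.

Lemma unip_neg (F : fieldType) (k : nat) :
  (mx22 0 (-1) 1 (- 2%:R) : 'M[F]_2) ^+ k =
  (-1) ^+ k *: mx22 (1 - k%:R) k%:R (- k%:R) (1 + k%:R).
Proof.
elim: k => [|k IH]; first by rewrite !expr0 scale1r !(mulr0n, subr0, oppr0, addr0) -scalar22.
rewrite exprSr IH -mulmxE -scalemxAl mul22 exprSr -scalerA scale22 (mulrSr 1 k).
rewrite !scale22; congr mx22; ring.
Qed.

Lemma CH22 (F : fieldType) (a b c d : F) :
  mx22 a b c d *m mx22 a b c d = (a + d) *: mx22 a b c d + (- (a * d - b * c))%:M.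
Proof. by rewrite mul22 scale22 scalar22 add22; congr mx22; ring. Qed.

Section GL2s.
Variable F : finFieldType.
Local Notation GL := (GL2 F).
Local Notation Z := (ZGL2 F).

Lemma GLvalJ (g p : GL) : GLval (g ^ p)%g = invmx (GLval p) *m (GLval g *m GLval p).
Proof. by rewrite conjgE !GL_MxE GL_VxE. Qed.

Lemma GLvalX (g : GL) n : GLval (g ^+ n)%g = GLval g ^+ n.
Proof. exact: FinRing.val_unitX. Qed.

Lemma GLunit (g : GL) : GLval g \in unitmx.
Proof. exact: GL_unitmx. Qed.

Lemma conj_companion (g : GL) s d : ~ (exists c, GLval g = c%:M) ->
  GLval g *m GLval g = s *: GLval g + d%:M -> d != 0 ->
  exists p : GL, (g ^ p)%g = mkGL (mx22 0 d 1 s).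
Proof.
move=> nsc H dn0; have [P [dP HP]] := companion nsc H.
exists (mkGL P); apply: val_inj.
change (GLval (g ^ mkGL P)%g = GLval (mkGL (mx22 0 d 1 s))).
rewrite GLvalJ !mkGLK ?det22 ?mul0r ?mulr1 ?sub0r ?oppr_eq0 // HP mulKmx //.
by rewrite unitmxE unitfE.
Qed.

Lemma nZ (g : GL) : g \in 'N(Z)%g.
Proof. exact: (subsetP (normal_norm (center_normal [set: GL]))) g (in_setT g). Qed.


Lemma key (r : nat) (x : PGL2 F) : prime r -> odd r -> (r %| #|PSL2 F|)%N ->
  ~~ (r %| #|F|)%N -> x \in PGL2set F -> #[x]%g = 2%N ->
  exists2 k, k \in PSL2 F & (r %| #[x * x ^ k]%g)%N.
Proof.
move=> pr oddr rL rq xP ox.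
case/morphimP: xP => a _ _ xa.
have aZ : a \notin Z.
  apply/negP => /coset_id; rewrite -xa => x1.
  by move: ox; rewrite x1 order1.
have a2Z : (a ^+ 2)%g \in Z.
  apply: coset_idr; first exact: nZ.
  by rewrite morphX ?nZ // -xa; rewrite -[in X in (_ ^+ X)%g]ox expg_order.
have Ansc : ~ (exists c, GLval a = c%:M) by case=> c /scalarZ; apply/negP.
have [l hl] := Zscalar a2Z.
rewrite FinRing.val_unitX expr2 -mulmxE in hl.
have ln0 : l != 0.
  apply/eqP => l0; have := GL_det a; move: (congr1 determinant hl).
  rewrite det_mulmx l0 det_scalar expr0n /= => /eqP.
  by rewrite mulf_eq0 orbb => /eqP ->; rewrite eqxx.
have [y yL oy] := Cauchy pr rL.
case/morphimP: yL => b _ bSL yb.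
have detb : \det (GLval b) = 1 by move: bSL; rewrite inE => /eqP.
have Bnsc : ~ (exists c, GLval b = c%:M).
  case=> c /scalarZ /coset_id; rewrite -yb => y1.
  by move: oy; rewrite y1 order1 => r1; move: pr; rewrite -r1.
set t := GLval b i0 i0 + GLval b i1 i1.
have CHb : GLval b *m GLval b = t *: GLval b + (-1)%:M.
  by rewrite -detb [GLval b]mx22E CH22 det22.
have [p bp] : exists p : GL, (b ^ p)%g = mkGL (mx22 0 (-1) 1 t).
  by apply: conj_companion Bnsc CHb _; rewrite oppr_eq0 oner_eq0.
set M := mx22 0 (-1) 1 t.
have detM : \det M = 1 by rewrite /M det22; ring.
set m := mkGL M.
have mM : GLval m = M by rewrite mkGLK // detM oner_eq0.
have om : #[coset Z m]%g = r.
  by rewrite /m /M -bp morphJ ?nZ // -yb orderJ.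
have noscal : forall c, GLval (m ^+ #|F|)%g = c%:M -> False.
  move=> c /scalarZ /coset_id; rewrite morphX ?nZ // => /eqP.
  by rewrite -order_dvdn om (negPf rq).
have tcond : (2%:R : F) != 0 -> t ^+ 2 != 4%:R.
  move=> two0; apply/negP => /eqP t4.
  have : (t - 2%:R) * (t + 2%:R) = 0 by rewrite -[RHS](subrr (4%:R : F)) -{1}t4; ring.
  move/eqP; rewrite mulf_eq0 => /orP[] /eqP ht.
    have t2 : t = 2%:R by apply/eqP; rewrite -subr_eq0 ht.
    apply: (noscal 1); rewrite GLvalX mM /M t2 unip_pos charq.
    by rewrite subr0 oppr0 addr0 scalar22.
  have t2 : t = - 2%:R by apply/eqP; rewrite -subr_eq0 opprK ht.
  apply: (noscal ((-1) ^+ #|F|)); rewrite GLvalX mM /M t2 unip_neg charq.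
  by rewrite subr0 oppr0 addr0 scale22 scalar22 !mulr0 mulr1.
have [u [v [hN Xnsc]]] := rep ln0 tcond.
set X := mx22 v (u + t * v) u (- v).
have detX : \det X = - l by rewrite /X det22 -hN; ring.
set xx := mkGL X.
have xX : GLval xx = X by rewrite mkGLK // detX oppr_eq0.
have XX : GLval xx *m GLval xx = 0 *: GLval xx + l%:M.
  rewrite xX scale0r add0r /X mul22 scalar22 -hN; refine (mx22_congr _ _ _ _); ring.
have Xnsc' : ~ (exists c, GLval xx = c%:M) by rewrite xX.
have AA : GLval a *m GLval a = 0 *: GLval a + l%:M by rewrite scale0r add0r.
have [p1 hp1] := conj_companion Ansc AA ln0.
have [p2 hp2] := conj_companion Xnsc' XX ln0.
set w := (p2 * p1^-1)%g.
have axx : a = (xx ^ w)%g by rewrite /w conjgM hp2 -hp1 conjgK.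
have Minv : invmx M = mx22 t 1 (-1) 0.
  have Mu : M \in unitmx by rewrite unitmxE detM unitr1.
  have MMi : M *m mx22 t 1 (-1) 0 = 1%:M.
    by rewrite /M mul22 scalar22; refine (mx22_congr _ _ _ _); ring.
  by rewrite -[RHS]mul1mx -(mulVmx Mu) -mulmxA MMi mulmx1.
have zd : \det (l%:M : 'M[F]_2) != 0 by rewrite det_scalar expf_neq0.
set z := mkGL (l%:M).
have zZ : z \in Z by apply: (@scalarZ _ z l); rewrite mkGLK.
have ident : (xx * xx ^ m)%g = (z * m ^+ 2)%g.
  apply: val_inj; change (GLval (xx * xx ^ m)%g = GLval (z * m ^+ 2)%g).
  rewrite expgS expg1 !GL_MxE GL_VxE mM xX Minv mkGLK // mul_scalar_mx.
  by rewrite /X /M !mul22 scale22 -hN; refine (mx22_congr _ _ _ _); ring.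
set h := (m ^ w)%g.
have hSL : h \in SL2_group F.
  rewrite inE GLvalJ mM; have Wu := GLunit w; move: (GLval w) Wu => W Wu.
  rewrite !det_mulmx mulrCA -det_mulmx mulVmx //.
  by rewrite det1 mulr1 detM.
exists (coset Z h); first exact: mem_morphim (nZ h) hSL.
rewrite xa -morphJ ?nZ // -morphM ?nZ // axx /h -conjJg -conjMg ident.
have cz : coset_morphism Z z = 1%g := coset_id zZ.
rewrite morphJ ?nZ // orderJ morphM ?nZ // cz mul1g morphX ?nZ //.
rewrite orderXgcd om.
have -> : gcdn r 2 = 1%N by apply/eqP; rewrite -/(coprime r 2) coprimen2.
by rewrite divn1.
Qed.
End GL2s.
End Helpers.
Import Helpers.
Unset Implicit Arguments. Set Strict Implicit.

Theorem lemma1p9 (F : finFieldType) (r : nat) (x : PGL2 F) :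
  simple (PSL2 F) ->
  prime r -> odd r ->
  (r %| #|PSL2 F|)%N -> ~~ (r %| #|F|)%N ->
  x \in PGL2set F -> #[x]%g = 2%N ->
  beta_eq r x (PSL2 F) 2.
Proof.
move=> _ pr oddr rL rq xP ox.
split.
  have [k kL dv] := key pr oddr rL rq xP ox.
  exists (fun i : 'I_2 => if val i == 0%N then 1%g else k); split.
    by move=> i; case: ifP => _ //; exact: group1.
  apply: dvdn_trans dv _; apply: order_dvdG.
  apply: groupM; apply: mem_gen; apply/imsetP.
    by exists (@Ordinal 2 0 isT) => //=; rewrite conjg1.
  by exists (@Ordinal 2 1 isT).
move=> j; case: j => [|[|//]] _ [g [_ dv]].
  have s1 : (<< [set (x ^ g i)%g | i : 'I_0] >> \subset [1 (PGL2 F)])%g.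
    by rewrite gen_subG; apply/subsetP => z /imsetP[[i Hi]].
  move: (dvdn_trans dv (cardSg s1)); rewrite cards1 dvdn1 => /eqP r1.
  by rewrite r1 in pr.
have s1 : (<< [set (x ^ g i)%g | i : 'I_1] >> \subset <[x ^ g ord0]>)%g.
  by rewrite gen_subG; apply/subsetP => z /imsetP[i _ ->]; rewrite (ord1 i) cycle_id.
move: (dvdn_trans dv (cardSg s1)); rewrite -[#|<[_]>%g|]/(#[_]%g) orderJ ox => r2.
have r2' : r = 2%N.
  apply/eqP; rewrite eqn_leq (dvdn_leq _ r2) //=; exact: prime_gt1.
by rewrite r2' in oddr.
Qed.
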